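(* Let $a>0$, $\mu=p/q\in(0,1)$ with $p,q$ coprime, and consider $u_t+au_x=0$ on the periodic domain $[0,1)$ with 1-periodic initial function $u_0\in C^0([0,1])$. For each $m\in\mathbb{N}$ with $N=\frac{1}{\mu h}\in\mathbb{N}$, $h=1/m$, choose $\delta=\delta(h)$ with $0<\delta<h/q$, and initialize the nonlinear jet scheme by $$\phi_j^0=\hat\phi_j+\frac{\hat\phi_{j+1}-\hat\phi_j}{h}\,\delta,\qquad \psi_j^0=\frac{\hat\phi_{j+1}-\hat\phi_j}{h},\qquad \hat\phi_j=u_0(x_j),$$ (indices mod $m$), i.e. $\phi_j^0=I(x_j+\delta)$, $\psi_j^0=I'(x_j+\delta)$ where $I$ is the continuous periodic piecewise linear interpolant of the data $(x_j,\hat\phi_j)$. Let $\boldsymbol U^{h,t_n}$ be the state after $n$ jet scheme steps ($t_n=n\Delta t$, $\Delta t=\mu h/a$), and let $\varepsilon^{h,t_n}=\|\mathcal{I}(\boldsymbol U^{h,t_n})-u(\cdot,t_n)\|_{L^1([0,1])}$, where $u(x,t_n)=u_0(x-at_n \bmod 1)$. Then $\mathcal{I}(\boldsymbol U^{h,0})(x)=I(x+\delta)$, for all $n$ one has $\mathcal{I}(\boldsymbol U^{h,t_n})(x)=\mathcal{I}(\boldsymbol U^{h,0})(x-n\mu h\bmod 1)$, and $$\sup_{n\ge0}\varepsilon^{h,t_n}\le \omega(u_0,h)+\omega(u_0,\delta).$$ Consequently the scheme has the commuting limits property $$\lim_{h\to0}\limsup_{n\to\infty}\varepsilon^{h,t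_n}=0=\limsup_{n\to\infty}\lim_{h\to0}\varepsilon^{h,t_n}.$$
   Context: Grid $x_j=jh$, $j=1,\dots,m$, on the periodic domain. State vector $\boldsymbol U=(\phi_1,\psi_1,\dots,\phi_m,\psi_m)\in\mathbb{R}^{2m}$. Nonlinear jet scheme interpolant $\mathcal{I}(\boldsymbol U)$: on each cell $[x_j,x_{j+1}]$ let $L_L(x)=\phi_j+\psi_j(x-x_j)$, $L_R(x)=\phi_{j+1}+\psi_{j+1}(x-x_{j+1})$; if $\psi_j\ne\psi_{j+1}$ and their intersection point $x_k$ lies in $(x_j,x_{j+1})$, set $\mathcal{I}(\boldsymbol U)=L_L$ on $[x_j,x_k]$ and $=L_R$ on $(x_k,x_{j+1}]$; otherwise use the linear interpolant $\phi_j+\frac{\phi_{j+1}-\phi_j}{h}(x-x_j)$ on the cell. One jet scheme step: $\boldsymbol U\mapsto\mathcal{E}(\mathcal{A}\,\mathcal{I}(\boldsymbol U))$, where $\mathcal{A}f(x)=f(x-\mu h)$ is the periodic shift by $a\Delta t$ and $\mathcal{E}f=(f(x_1),f'(x_1),\dots,f(x_m),f'(x_m))$ with left-sided derivatives taken at kinks; equivalently, $\phi_j^{n+1}=P(x_j-\mu h)$, $\psi_j^{n+1}=P'(x_j-\mu h)$ with $P=\mathcal{I}(\boldsymbol U^{h,t_n})$. The modulus of continuity is $\omega(u_0,r)=\sup\{|u_0(x)-u_0(y)|:x,y\in[0,1],\ |x-y|<r\}$. The commuting-limits identity is understood with $h=1/m$ ranging over those $m$ for which $N\in\mathbb{N}$,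 and exact arithmetic is assumed. *)

(* Defs.v *)
From Stdlib Require Import Reals ZArith Lra.
From Coquelicot Require Import Coquelicot.
Open Scope R_scope.

(* fractional part: frac x in [0,1), frac x = x - floor x *)
Definition frac (x : R) : R := x - IZR (up x - 1).

(* A state vector U = (phi_i, psi_i), stored as a function of the node index
   i, where node i sits at x_i = i h; indices are always used modulo m
   (node 0 is the node x_m = 1, periodically identified with 0). *)
Definition state := nat -> R * R.

Section Jet.
Variables (m : nat).
Let h : R := / INR m.

(* For a real z, the cell containing z seen from the left: integer k with
   k h < z <= (k+1) h, i.e. k = ceil(z/h) - 1, and local coordinate
   s = z - k h in (0,h]. *)
Definition cellk (z : R) : Z := (- up (- (z / h)))%Z.
Definition locs (z : R) : R := z - IZR (cellk z) * h.
Definition nodeL (z : R) : nat := Z.to_nat (Z.modulo (cellk z) (Z.of_nat m)).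
Definition nodeR (z : R) : nat := Z.to_nat (Z.modulo (cellk z + 1) (Z.of_nat m)).

(* kink point (local coordinate) of L_L(s) = phL + psL s and
   L_R(s) = phR + psR (s - h); it is only used when psL <> psR *)
Definition kinkpt (phL psL phR psR : R) : R := (phR - psR * h - phL) / (psL - psR).
Definition has_kink (phL psL phR psR : R) : bool :=
  if Req_EM_T psL psR then false
  else if Rlt_dec 0 (kinkpt phL psL phR psR) then
         if Rlt_dec (kinkpt phL psL phR psR) h then true else false
       else false.

Definition piece_val (phL psL phR psR s : R) : R :=
  if has_kink phL psL phR psR then
    (if Rle_dec s (kinkpt phL psL phR psR) then phL + psL * s
     else phR + psR * (s - h))
  else phL + (phR - phL) / h * s.

Definition piece_lslope (phL psL phR psR s : R) : R :=
  if has_kink phL psL phR psR then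
    (if Rle_dec s (kinkpt phL psL phR psR) then psL else psR)
  else (phR - phL) / h.

Definition jetI (U : state) (z : R) : R :=
  piece_val (fst (U (nodeL z))) (snd (U (nodeL z)))
            (fst (U (nodeR z))) (snd (U (nodeR z))) (locs z).

Definition jetI_lderiv (U : state) (z : R) : R :=
  piece_lslope (fst (U (nodeL z))) (snd (U (nodeL z)))
               (fst (U (nodeR z))) (snd (U (nodeR z))) (locs z).

Definition jet_step (mu : R) (U : state) : state :=
  fun i => (jetI U (INR i * h - mu * h), jetI_lderiv U (INR i * h - mu * h)).

Definition jet_iter (mu : R) (U0 : state) (n : nat) : state :=
  Nat.iter n (jet_step mu) U0.

Definition lin_interp (u0 : R -> R) (z : R) : R :=
  u0 (INR (nodeL z) * h)
  + (u0 (INR (nodeR z) * h) - u0 (INR (nodeL z) * h)) / h * locs z.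

Definition jet_init (u0 : R -> R) (delta : R) : state :=
  fun i => (u0 (INR i * h) + (u0 (INR (S i) * h) - u0 (INR i * h)) / h * delta,
            (u0 (INR (S i) * h) - u0 (INR i * h)) / h).

End Jet.

Definition exact_sol (u0 : R -> R) (a x t : R) : R := u0 (frac (x - a * t)).

(* error eps^{h,t_n} = || I(U^{h,t_n}) - u(., t_n) ||_{L^1([0,1])},
   with h = 1/m, t_n = n dt, dt = mu h / a *)
Definition jet_err (a mu : R) (u0 : R -> R) (delta : R) (m n : nat) : R :=
  RInt (fun x => Rabs (jetI m (jet_iter m mu (jet_init m u0 delta) n) x
                       - exact_sol u0 a x (INR n * (mu * / INR m / a)))) 0 1.

Definition omega (u0 : R -> R) (r : R) : Rbar :=
  Lub_Rbar (fun v => exists x y, 0 <= x <= 1 /\ 0 <= y <= 1 /\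
                      Rabs (x - y) < r /\ v = Rabs (u0 x - u0 y)).

Definition admissible (mu : R) (m : nat) : Prop :=
  (0 < m)%nat /\ exists N : nat, INR N = 1 / (mu * / INR m).

(* Main.v *)
Require Import Defs.
From Stdlib Require Import Reals ZArith Lra Lia.
From Coquelicot Require Import Coquelicot.
Open Scope R_scope.

Section S1.
Variable u0 : R -> R.
Hypothesis Hper : forall x, u0 (x + 1) = u0 x.

Lemma per_nat : forall (n : nat) x, u0 (x + INR n) = u0 x.
Proof.
  induction n; intros x. { simpl; rewrite Rplus_0_r; auto. }
  rewrite S_INR. replace (x + (INR n + 1)) with ((x + INR n) + 1) by ring.
  rewrite Hper; auto.
Qed.

Lemma per_int : forall (n : Z) x, u0 (x + IZR n) = u0 x.
Proof.
  intros n x. destruct (Z_le_gt_dec 0 n).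
  - rewrite <- (Z2Nat.id n) by lia. rewrite <- INR_IZR_INZ. apply per_nat.
  - rewrite <- (per_nat (Z.to_nat (- n)) (x + IZR n)).
    rewrite INR_IZR_INZ, Z2Nat.id by lia. rewrite opp_IZR. f_equal; ring.
Qed.
End S1.

Section S2.
Variable m : nat.
Hypothesis Hm : (0 < m)%nat.
Let h := / INR m.

Lemma INRm_pos : 0 < INR m.
Proof. apply lt_0_INR; auto. Qed.
Lemma h_pos : 0 < h.
Proof. unfold h; apply Rinv_0_lt_compat, INRm_pos. Qed.
Lemma mh : INR m * h = 1.
Proof. unfold h; field. apply Rgt_not_eq, INRm_pos. Qed.

Lemma cellk_char : forall y K, IZR K * h < y <= IZR (K+1) * h -> cellk m y = K.
Proof.
  intros y K [H1 H2]. unfold cellk.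
  assert (E : y / / INR m = y * INR m) by (field; apply Rgt_not_eq, INRm_pos).
  rewrite E.
  assert (Hm' := INRm_pos). rewrite plus_IZR in H2.
  assert (A1 : IZR K < y * INR m).
  { apply Rmult_lt_reg_r with h. apply h_pos.
    rewrite Rmult_assoc, mh. lra. }
  assert (A2 : y * INR m <= IZR K + 1).
  { apply Rmult_le_reg_r with h. apply h_pos.
    rewrite Rmult_assoc, mh. lra. }
  rewrite <- (tech_up (- (y * INR m)) (- K)). lia.
  rewrite opp_IZR; lra. rewrite opp_IZR; lra.
Qed.

Lemma cellk_spec : forall y, IZR (cellk m y) * h < y <= IZR (cellk m y + 1) * h.
Proof.
  intros y. unfold cellk.
  assert (E : y / / INR m = y * INR m) by (field; apply Rgt_not_eq, INRm_pos).
  rewrite E. destruct (archimed (- (y * INR m))) as [H1 H2].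
  rewrite plus_IZR, opp_IZR. assert (Hh := h_pos). assert (Hmh := mh).
  set (u := IZR (up (- (y * INR m)))) in *.
  assert (y = y * INR m * h) by (rewrite Rmult_assoc, Hmh; ring).
  split.
  - rewrite H at 1. apply Rmult_lt_compat_r; lra.
  - rewrite H at 1. apply Rmult_le_compat_r; lra.
Qed.

Lemma locs_eq : forall y, locs m y = y - IZR (cellk m y) * h.
Proof. reflexivity. Qed.

Lemma node_eq : forall K : Z,
  INR (Z.to_nat (K mod Z.of_nat m)) * h = IZR K * h - IZR (K / Z.of_nat m).
Proof.
  intros K. assert (Hz : (0 < Z.of_nat m)%Z) by lia.
  assert (B := Z.mod_pos_bound K _ Hz).
  rewrite INR_IZR_INZ, Z2Nat.id by lia.
  rewrite (Z.div_mod K (Z.of_nat m)) at 2 by lia.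
  rewrite plus_IZR, mult_IZR, <- INR_IZR_INZ.
  assert (Hmh := mh).
  replace ((INR m * IZR (K / Z.of_nat m) + IZR (K mod Z.of_nat m)) * h)
    with (IZR (K / Z.of_nat m) * (INR m * h) + IZR (K mod Z.of_nat m) * h) by ring.
  rewrite Hmh. ring.
Qed.

Lemma node_lt : forall K : Z, (Z.to_nat (K mod Z.of_nat m) < m)%nat.
Proof.
  intros K. assert (Hz : (0 < Z.of_nat m)%Z) by lia.
  assert (B := Z.mod_pos_bound K _ Hz). lia.
Qed.

End S2.
Section S3.
Variable u0 : R -> R.
Hypothesis Hper : forall x, u0 (x + 1) = u0 x.
Variable m : nat.
Hypothesis Hm : (0 < m)%nat.
Let h := / INR m.
Definition UU (K : Z) := u0 (IZR K * h).
Definition sl (K : Z) := (UU (K + 1) - UU K) / h.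
Definition slope_at (y : R) :=
  (u0 (INR (nodeR m y) * h) - u0 (INR (nodeL m y) * h)) / h.

Lemma u0_node : forall K, u0 (INR (Z.to_nat (K mod Z.of_nat m)) * h) = UU K.
Proof.
  intros K. unfold h. rewrite node_eq by auto. unfold UU.
  unfold Rminus. rewrite <- opp_IZR. apply per_int; auto.
Qed.

Lemma UU_per : forall K n, UU (K + Z.of_nat m * n) = UU K.
Proof.
  intros K n. unfold UU. rewrite plus_IZR, mult_IZR, <- INR_IZR_INZ.
  replace ((IZR K + INR m * IZR n) * h) with (IZR K * h + IZR n * (INR m * h)) by ring.
  unfold h. rewrite mh by auto. rewrite Rmult_1_r. apply per_int; auto.
Qed.

Lemma LI : forall K t, 0 < t <= h ->
  lin_interp m u0 (IZR K * h + t) = UU K + sl K * t.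
Proof.
  intros K t Ht. assert (C : cellk m (IZR K * h + t) = K).
  { apply cellk_char; auto. rewrite plus_IZR. fold h. lra. }
  unfold lin_interp, nodeL, nodeR, locs. rewrite C. fold h.
  rewrite !u0_node. unfold sl. f_equal. f_equal. ring.
Qed.

Lemma SA : forall K t, 0 < t <= h -> slope_at (IZR K * h + t) = sl K.
Proof.
  intros K t Ht. assert (C : cellk m (IZR K * h + t) = K).
  { apply cellk_char; auto. rewrite plus_IZR. fold h. lra. }
  unfold slope_at, nodeL, nodeR. rewrite C. rewrite !u0_node. reflexivity.
Qed.

Lemma h_ne : h <> 0.
Proof. apply Rgt_not_eq, h_pos; auto. Qed.

Lemma sl_mul : forall K, sl K * h = UU (K + 1) - UU K.
Proof. intros K; unfold sl; field; apply h_ne. Qed.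

Lemma LIc : forall K t, 0 <= t <= h ->
  lin_interp m u0 (IZR K * h + t) = UU K + sl K * t.
Proof.
  intros K t Ht. destruct (Req_dec t 0) as [->|Hn]; [|apply LI; lra].
  replace (IZR K * h + 0) with (IZR (K - 1) * h + h) by (rewrite minus_IZR; ring).
  assert (Hh := h_pos m Hm). fold h in Hh.
  rewrite LI by lra. rewrite sl_mul. replace (K - 1 + 1)%Z with K by ring. ring.
Qed.

Lemma cell_decomp : forall y, y = IZR (cellk m y) * h + locs m y /\
   0 < locs m y <= h.
Proof.
  intros y. destruct (cellk_spec m Hm y) as [H1 H2]. fold h in H1, H2.
  rewrite locs_eq. fold h. rewrite plus_IZR in H2. split; [ring| lra].
Qed.

Lemma lin_per : forall y (n : Z), lin_interp m u0 (y + IZR n) = lin_interp m u0 y.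
Proof.
  intros y n. destruct (cell_decomp y) as [E Ht].
  set (K := cellk m y) in *. set (t := locs m y) in *.
  rewrite E.
  replace (IZR K * h + t + IZR n) with (IZR (K + Z.of_nat m * n) * h + t).
  2:{ rewrite plus_IZR, mult_IZR, <- INR_IZR_INZ.
      replace ((IZR K + INR m * IZR n) * h) with (IZR K * h + IZR n * (INR m * h)) by ring.
      unfold h. rewrite mh by auto. ring. }
  rewrite !LI by auto. unfold sl. replace (K + Z.of_nat m * n + 1)%Z with ((K + 1) + Z.of_nat m * n)%Z by ring.
  rewrite !UU_per. reflexivity.
Qed.

End S3.
Section S4.
Variable u0 : R -> R.
Hypothesis Hper : forall x, u0 (x + 1) = u0 x.
Variable m : nat.
Hypothesis Hm : (0 < m)%nat.
Let h := / INR m.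

Lemma sl_per : forall K n, sl u0 m (K + Z.of_nat m * n) = sl u0 m K.
Proof.
  intros K n. unfold sl. replace (K + Z.of_nat m * n + 1)%Z with ((K + 1) + Z.of_nat m * n)%Z by ring.
  rewrite !UU_per; auto.
Qed.

Lemma shift_int : forall K t (n : Z), IZR K * h + t + IZR n = IZR (K + Z.of_nat m * n) * h + t.
Proof.
  intros. rewrite plus_IZR, mult_IZR, <- INR_IZR_INZ.
  replace ((IZR K + INR m * IZR n) * h) with (IZR K * h + IZR n * (INR m * h)) by ring.
  unfold h. rewrite mh by auto. ring.
Qed.

Lemma sa_per : forall y (n : Z), slope_at u0 m (y + IZR n) = slope_at u0 m y.
Proof.
  intros y n. destruct (cell_decomp m Hm y) as [E Ht].
  set (K := cellk m y) in *. set (t := locs m y) in *.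
  rewrite E. rewrite shift_int. rewrite !SA; auto. apply sl_per.
Qed.

Lemma node_shift : forall k c, INR (Z.to_nat (k mod Z.of_nat m)) * h + c
   = (IZR k * h + c) + IZR (- (k / Z.of_nat m)).
Proof. intros. unfold h. rewrite node_eq by auto. rewrite opp_IZR. ring. Qed.

Definition Sst (c : R) : state :=
  fun i => (lin_interp m u0 (INR i * h + c), slope_at u0 m (INR i * h + c)).

Lemma agree : forall U1 U2 : state, (forall i, (i < m)%nat -> U1 i = U2 i) ->
  forall z, jetI m U1 z = jetI m U2 z /\ jetI_lderiv m U1 z = jetI_lderiv m U2 z.
Proof.
  intros U1 U2 H z. unfold jetI, jetI_lderiv, nodeL, nodeR.
  rewrite !H by (apply node_lt; auto). split; reflexivity.
Qed.

Lemma PV1 : forall V A B r s, 0 < r < h -> 0 < s <= h -> r + s <= h ->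
  piece_val m (V + A*r) A (V + A*h + B*r) B s = V + A*(r+s) /\
  piece_lslope m (V + A*r) A (V + A*h + B*r) B s = A.
Proof.
  intros V A B r s Hr Hs Hrs. assert (Hh : h <> 0) by lra.
  unfold piece_val, piece_lslope, has_kink. fold h.
  destruct (Req_EM_T A B) as [<-|HAB].
  - split; field; auto.
  - assert (Ek : kinkpt m (V + A*r) A (V + A*h + B*r) B = h - r).
    { unfold kinkpt. fold h. field. intro; apply HAB; lra. }
    rewrite Ek. destruct (Rlt_dec 0 (h - r)); [|lra].
    destruct (Rlt_dec (h - r) h); [|lra].
    destruct (Rle_dec s (h - r)); [|lra]. split; ring.
Qed.

Lemma PV2 : forall V A B r s, 0 < r < h -> 0 < s <= h -> h < r + s ->
  piece_val m (V + A*r) A (V + A*h + B*r) B s = V + A*h + B*(r+s-h) /\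
  piece_lslope m (V + A*r) A (V + A*h + B*r) B s = B.
Proof.
  intros V A B r s Hr Hs Hrs. assert (Hh : h <> 0) by lra.
  unfold piece_val, piece_lslope, has_kink. fold h.
  destruct (Req_EM_T A B) as [<-|HAB].
  - split; field; auto.
  - assert (Ek : kinkpt m (V + A*r) A (V + A*h + B*r) B = h - r).
    { unfold kinkpt. fold h. field. intro; apply HAB; lra. }
    rewrite Ek. destruct (Rlt_dec 0 (h - r)); [|lra].
    destruct (Rlt_dec (h - r) h); [|lra].
    destruct (Rle_dec s (h - r)); [lra|]. split; ring.
Qed.

Lemma KEY : forall c, (forall K : Z, c <> IZR K * h) -> forall z,
  jetI m (Sst c) z = lin_interp m u0 (z + c) /\
  jetI_lderiv m (Sst c) z = slope_at u0 m (z + c).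
Proof.
  intros c Hc z.
  destruct (cell_decomp m Hm c) as [Ec Hr].
  set (j0 := cellk m c) in *. set (r := locs m c) in *. fold h in Ec, Hr.
  assert (Hrh : r <> h).
  { intro E. apply (Hc (j0 + 1)%Z). rewrite Ec, E, plus_IZR. ring. }
  assert (Hr' : 0 < r < h) by (destruct Hr as [Hr1 Hr2]; destruct Hr2; [lra|contradiction]).
  clear Hr Hrh.
  destruct (cell_decomp m Hm z) as [Ez Hs]. fold h in Ez, Hs.
  set (k := cellk m z) in *. set (s := locs m z) in *.
  assert (Hh := h_pos m Hm). fold h in Hh.
  unfold jetI, jetI_lderiv, Sst, nodeL, nodeR. cbn [fst snd].
  fold k. fold s. fold h.
  rewrite !node_shift, lin_per, sa_per, lin_per, sa_per by auto.
  assert (E1 : IZR k * h + c = IZR (k + j0) * h + r) by (rewrite Ec, plus_IZR; ring).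
  assert (E2 : IZR (k + 1) * h + c = IZR (k + j0 + 1) * h + r) by (rewrite Ec, !plus_IZR; ring).
  rewrite E1, E2. rewrite !LI, !SA by (auto; change (/ INR m) with h; lra).
  assert (EU : UU u0 m (k + j0 + 1) = UU u0 m (k + j0) + sl u0 m (k + j0) * h)
    by (rewrite sl_mul; auto; ring).
  rewrite EU.
  assert (Ezc : z + c = IZR (k + j0) * h + (r + s)) by (rewrite Ez, Ec, plus_IZR; ring).
  rewrite Ezc.
  destruct (Rle_dec (r + s) h) as [Hle|Hgt].
  - destruct (PV1 (UU u0 m (k + j0)) (sl u0 m (k + j0)) (sl u0 m (k + j0 + 1)) r s)
      as [P1 P2]; auto; try lra.
    rewrite P1, P2. rewrite LI, SA by (auto; change (/ INR m) with h; lra). split; ring.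
  - destruct (PV2 (UU u0 m (k + j0)) (sl u0 m (k + j0)) (sl u0 m (k + j0 + 1)) r s)
      as [P1 P2]; auto; try lra.
    rewrite P1, P2.
    replace (IZR (k + j0) * h + (r + s)) with (IZR (k + j0 + 1) * h + (r + s - h))
      by (rewrite plus_IZR; ring).
    rewrite LI, SA by (auto; change (/ INR m) with h; lra). rewrite EU. split; ring.
Qed.

End S4.
Section S5.
Variable u0 : R -> R.
Hypothesis Hper : forall x, u0 (x + 1) = u0 x.
Variable m : nat.
Hypothesis Hm : (0 < m)%nat.
Let h := / INR m.

Lemma init_eq : forall delta, 0 < delta < h -> forall i,
  jet_init m u0 delta i = Sst u0 m delta i.
Proof.
  intros d Hd i. unfold jet_init, Sst. fold h.
  rewrite INR_IZR_INZ. rewrite LI, SA by (auto; change (/ INR m) with h; lra).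
  unfold sl, UU. rewrite S_INR, INR_IZR_INZ, plus_IZR. reflexivity.
Qed.

Lemma iter_eq : forall mu U0 c0, (forall i, U0 i = Sst u0 m c0 i) ->
  (forall n (K : Z), c0 - INR n * mu * h <> IZR K * h) ->
  forall n i, jet_iter m mu U0 n i = Sst u0 m (c0 - INR n * mu * h) i.
Proof.
  intros mu U0 c0 H0 Hnm n. induction n; intros i.
  - rewrite H0. simpl. f_equal; f_equal; ring.
  - change (jet_iter m mu U0 (S n)) with (jet_step m mu (jet_iter m mu U0 n)).
    unfold jet_step. fold h.
    destruct (agree m Hm (jet_iter m mu U0 n) (Sst u0 m (c0 - INR n * mu * h))
       (fun i _ => IHn i) (INR i * h - mu * h)) as [A1 A2].
    rewrite A1, A2.
    destruct (KEY u0 Hper m Hm (c0 - INR n * mu * h) (Hnm n) (INR i * h - mu * h)) as [K1 K2].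
    rewrite K1, K2. unfold Sst. fold h. rewrite S_INR.
    f_equal; f_equal; ring.
Qed.

Lemma nonmult : forall (p q n : nat) d (K : Z), (0 < q)%nat ->
  0 < d < h / INR q -> d - INR n * (INR p / INR q) * h <> IZR K * h.
Proof.
  intros p q n d K Hq Hd E.
  assert (Hh := h_pos m Hm). fold h in Hh.
  assert (Hq' : 0 < INR q) by (apply lt_0_INR; auto).
  set (X := d * INR q / h).
  assert (EX : X = IZR (K * Z.of_nat q + Z.of_nat n * Z.of_nat p)).
  { unfold X. rewrite plus_IZR, !mult_IZR, <- !INR_IZR_INZ.
    replace d with (IZR K * h + INR n * (INR p / INR q) * h) by lra.
    field. lra. }
  assert (X0 : 0 < X).
  { unfold X. apply Rdiv_lt_0_compat; nra. }
  assert (X1 : X < 1).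
  { unfold X. apply Rmult_lt_reg_r with h; auto. unfold Rdiv.
    rewrite Rmult_assoc, Rinv_l by lra.
    destruct Hd as [_ Hd]. unfold Rdiv in Hd.
    apply Rmult_lt_compat_r with (r := INR q) in Hd; auto.
    rewrite Rmult_assoc, Rinv_l in Hd by lra. lra. }
  rewrite EX in X0, X1. apply lt_IZR in X0. apply lt_IZR in X1. lia.
Qed.

End S5.
Section S6.
Variable u0 : R -> R.
Hypothesis Hcont : forall x, continuity_pt u0 x.

Definition Eset (r : R) := (fun v => exists x y, 0 <= x <= 1 /\ 0 <= y <= 1 /\
                      Rabs (x - y) < r /\ v = Rabs (u0 x - u0 y)).
Definition W (r : R) : R := real (omega u0 r).

Lemma UC : forall eps, 0 < eps -> exists d, 0 < d /\ forall x y, 0 <= x <= 1 -> 0 <= y <= 1 ->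
  Rabs (x - y) < d -> Rabs (u0 x - u0 y) < eps.
Proof.
  intros eps He.
  assert (H := Heine u0 (fun c => 0 <= c <= 1) (compact_P3 0 1) (fun x _ => Hcont x)).
  destruct (H (mkposreal eps He)) as [d Hd]. exists d. split. apply cond_pos.
  intros; apply Hd; auto.
Qed.

Lemma bnd : exists M, forall x, 0 <= x <= 1 -> Rabs (u0 x) <= M.
Proof.
  destruct (continuity_ab_maj u0 0 1 ltac:(lra) (fun c _ => Hcont c)) as [Mx [HM _]].
  destruct (continuity_ab_min u0 0 1 ltac:(lra) (fun c _ => Hcont c)) as [mx [Hmi _]].
  exists (Rabs (u0 Mx) + Rabs (u0 mx)). intros x Hx.
  specialize (HM x Hx). specialize (Hmi x Hx).
  pose proof (Rle_abs (u0 Mx)). pose proof (Rle_abs (- u0 mx)). rewrite Rabs_Ropp in H0.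
  pose proof (Rabs_pos (u0 Mx)). pose proof (Rabs_pos (u0 mx)).
  apply Rabs_le. lra.
Qed.

Lemma omega_props : forall r, 0 < r ->
  omega u0 r = Finite (W r) /\ 0 <= W r /\
  (forall x y, 0 <= x <= 1 -> 0 <= y <= 1 -> Rabs (x - y) < r -> Rabs (u0 x - u0 y) <= W r) /\
  (forall B, (forall x y, 0 <= x <= 1 -> 0 <= y <= 1 -> Rabs (x - y) < r -> Rabs (u0 x - u0 y) <= B) -> W r <= B).
Proof.
  intros r Hr. unfold W, omega.
  destruct (Lub_Rbar_correct (Eset r)) as [ub lub]. unfold Eset in ub, lub.
  destruct bnd as [M HM].
  assert (U0 : Rbar_le 0 (Lub_Rbar (Eset r))).
  { apply ub. exists 0, 0. repeat split; try lra. rewrite Rminus_0_r, Rabs_R0; lra.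
    rewrite Rminus_diag, Rabs_R0; reflexivity. }
  assert (U1 : Rbar_le (Lub_Rbar (Eset r)) (M + M)).
  { apply lub. intros v [x [y [Hx [Hy [_ ->]]]]]. simpl.
    eapply Rle_trans. apply Rabs_triang. rewrite Rabs_Ropp.
    pose proof (HM x Hx); pose proof (HM y Hy); lra. }
  unfold Eset. destruct (Lub_Rbar _) as [w| |] eqn:EL; simpl in U0, U1; try contradiction.
  simpl. split; [reflexivity|]. split; [lra|]. split.
  - intros x y Hx Hy Hxy. specialize (ub (Rabs (u0 x - u0 y))).
    simpl in ub. apply ub. exists x, y; repeat split; auto; lra.
  - intros B HB. specialize (lub (Finite B)). simpl in lub. apply lub.
    intros v [x [y [Hx [Hy [Hxy ->]]]]]. simpl. auto.
Qed.

Lemma W_closed : forall r x y, 0 < r -> 0 <= x <= 1 -> 0 <= y <= 1 -> Rabs (x - y) <= r ->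
  Rabs (u0 x - u0 y) <= W r.
Proof.
  intros r x y Hr Hx Hy Hxy. destruct (omega_props r Hr) as [_ [W0 [Wub _]]].
  apply le_epsilon. intros eps He.
  destruct (UC eps He) as [d [Hd Hud]].
  set (th := Rmin (d / (2 * r)) (1/2)).
  assert (Hth : 0 < th <= 1/2).
  { unfold th. split. apply Rmin_pos; [apply Rdiv_lt_0_compat|]; lra. apply Rmin_r. }
  assert (Hth2 : th * r < d).
  { unfold th. apply Rle_lt_trans with (d / (2 * r) * r).
    apply Rmult_le_compat_r; [lra|apply Rmin_l]. 
    replace (d / (2 * r) * r) with (d / 2) by (field; lra). lra. }
  set (x' := x + (y - x) * th).
  assert (Hx' : 0 <= x' <= 1) by (unfold x'; nra).
  assert (A1 : Rabs (u0 x - u0 x') < eps).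
  { apply Hud; auto. unfold x'. replace (x - (x + (y - x) * th)) with (- ((y - x) * th)) by ring.
    rewrite Rabs_Ropp, Rabs_mult, (Rabs_pos_eq th) by lra.
    rewrite <- Rabs_Ropp, Ropp_minus_distr in Hxy. nra. }
  assert (A2 : Rabs (u0 x' - u0 y) <= W r).
  { apply Wub; auto. unfold x'. replace (x + (y - x) * th - y) with ((x - y) * (1 - th)) by ring.
    rewrite Rabs_mult, (Rabs_pos_eq (1 - th)) by lra. nra. }
  replace (u0 x - u0 y) with ((u0 x - u0 x') + (u0 x' - u0 y)) by ring.
  eapply Rle_trans. apply Rabs_triang. lra.
Qed.

Lemma W_mono : forall r1 r2, 0 < r1 <= r2 -> W r1 <= W r2.
Proof.
  intros r1 r2 Hr. destruct (omega_props r1 ltac:(lra)) as [_ [_ [_ L1]]].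
  destruct (omega_props r2 ltac:(lra)) as [_ [_ [U2 _]]].
  apply L1. intros; apply U2; auto; lra.
Qed.

Lemma W_small : forall eps, 0 < eps -> exists r0, 0 < r0 /\ forall r, 0 < r <= r0 -> W r <= eps.
Proof.
  intros eps He. destruct (UC eps He) as [d [Hd Hud]]. exists d. split; auto.
  intros r Hr. destruct (omega_props r ltac:(lra)) as [_ [_ [_ L1]]].
  apply L1. intros. left. apply Hud; auto; lra.
Qed.

End S6.
Lemma conv1 : forall tau X Y Z A B, 0 <= tau <= 1 -> Rabs X <= A -> Rabs Y <= A -> Rabs Z <= B ->
  Rabs ((1 - tau) * X + tau * Y + Z) <= A + B.
Proof.
  intros tau X Y Z A B Ht HX HY HZ.
  apply Rabs_le. apply Rabs_le_between in HX. apply Rabs_le_between in HY.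
  apply Rabs_le_between in HZ. nra.
Qed.

Lemma conv2 : forall tau X Y A B, 0 <= tau <= 1/2 -> Rabs X <= B -> Rabs Y <= A + 2 * B ->
  B <= A -> 0 <= B -> Rabs ((1 - tau) * X + tau * Y) <= A + B.
Proof.
  intros tau X Y A B Ht HX HY HBA HB.
  apply Rabs_le. apply Rabs_le_between in HX. apply Rabs_le_between in HY. nra.
Qed.

Lemma lip2 : forall A B a b e, 0 <= a <= e -> 0 <= b <= e ->
  Rabs (A * a + B * b) <= (Rabs A + Rabs B) * e.
Proof.
  intros. eapply Rle_trans. apply Rabs_triang. rewrite !Rabs_mult, (Rabs_pos_eq a), (Rabs_pos_eq b) by lra.
  pose proof (Rabs_pos A); pose proof (Rabs_pos B). nra.
Qed.

Section S7.
Variable u0 : R -> R.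
Hypothesis Hper : forall x, u0 (x + 1) = u0 x.
Hypothesis Hcont : forall x, continuity_pt u0 x.
Variable m : nat.
Hypothesis Hm : (0 < m)%nat.
Let h := / INR m.

Lemma h_le1 : h <= 1.
Proof.
  unfold h. assert (1 <= INR m) by (apply (le_INR 1); lia).
  rewrite <- Rinv_1. apply Rinv_le_contravar; lra.
Qed.

Lemma frac_range : forall y, 0 <= y - IZR (up y - 1) < 1.
Proof. intros y. destruct (archimed y). rewrite minus_IZR. lra. Qed.

Lemma lin_loclip : forall y, exists C d, 0 < d /\ forall y2, Rabs (y2 - y) < d ->
  Rabs (lin_interp m u0 y2 - lin_interp m u0 y) <= C * Rabs (y2 - y).
Proof.
  intros y. destruct (cell_decomp m Hm y) as [Ey Ht]. fold h in Ey, Ht.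
  set (K := cellk m y) in *. set (t := locs m y) in *.
  exists (Rabs (sl u0 m K) + Rabs (sl u0 m (K + 1))), t. split; [lra|].
  intros y2 Hy2. apply Rabs_def2 in Hy2.
  rewrite Ey. rewrite LI by (auto; change (/ INR m) with h; lra).
  destruct (Rle_dec y2 (IZR (K + 1) * h)) as [H1|H1].
  - rewrite plus_IZR in H1.
    assert (E2 : lin_interp m u0 y2 = UU u0 m K + sl u0 m K * (y2 - IZR K * h)).
    { rewrite <- LI by (auto; change (/ INR m) with h; lra). f_equal; unfold h; ring. }
    rewrite E2.
    replace (UU u0 m K + sl u0 m K * (y2 - IZR K * h) - (UU u0 m K + sl u0 m K * t))
      with (sl u0 m K * (y2 - (IZR K * h + t))) by ring.
    rewrite Rabs_mult. pose proof (Rabs_pos (sl u0 m (K+1))).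
    pose proof (Rabs_pos (y2 - (IZR K * h + t))). nra.
  - rewrite plus_IZR in H1.
    assert (E2 : lin_interp m u0 y2 = UU u0 m (K+1) + sl u0 m (K+1) * (y2 - (IZR K + 1) * h)).
    { rewrite <- LI by (auto; change (/ INR m) with h; lra). f_equal. rewrite plus_IZR; unfold h; ring. }
    rewrite E2.
    replace (UU u0 m (K + 1)) with (UU u0 m K + sl u0 m K * h) by (rewrite sl_mul; auto; ring).
    replace (UU u0 m K + sl u0 m K * h + sl u0 m (K + 1) * (y2 - (IZR K + 1) * h) -
      (UU u0 m K + sl u0 m K * t)) with
      (sl u0 m K * (h - t) + sl u0 m (K + 1) * (y2 - (IZR K + 1) * h)) by ring.
    rewrite (Rabs_pos_eq (y2 - _)) by lra.
    apply lip2; lra.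
Qed.

Lemma lin_cont : forall y, continuity_pt (lin_interp m u0) y.
Proof.
  intros y. destruct (lin_loclip y) as [C [d [Hd HL]]].
  unfold continuity_pt, continue_in, limit1_in, limit_in. simpl. unfold R_dist.
  intros eps He. exists (Rmin d (eps / (Rabs C + 1))). split.
  { apply Rmin_pos; auto. apply Rdiv_lt_0_compat; auto. pose proof (Rabs_pos C); lra. }
  intros x [_ Hx]. assert (Hx1 : Rabs (x - y) < d) by (eapply Rlt_le_trans; [apply Hx|apply Rmin_l]).
  assert (Hx2 : Rabs (x - y) < eps / (Rabs C + 1)) by (eapply Rlt_le_trans; [apply Hx|apply Rmin_r]).
  specialize (HL x Hx1). pose proof (Rabs_pos C). pose proof (Rle_abs C).
  pose proof (Rabs_pos (x - y)).
  apply Rle_lt_trans with (C * Rabs (x - y)); auto.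
  apply Rmult_lt_compat_r with (r := Rabs C + 1) in Hx2; [|lra].
  replace (eps / (Rabs C + 1) * (Rabs C + 1)) with eps in Hx2 by (field; lra). nra.
Qed.

Variable d : R.
Hypothesis Hd : 0 < d < h / 2.

Lemma pw_bound : forall y, Rabs (lin_interp m u0 (y + d) - u0 y) <= W u0 h + W u0 d.
Proof.
  intros y. assert (Hh := h_pos m Hm). fold h in Hh. assert (H1 := h_le1).
  assert (Wm : W u0 d <= W u0 h) by (apply W_mono; auto; lra).
  destruct (omega_props u0 Hcont d ltac:(lra)) as [_ [W0 _]].
  set (y' := y - IZR (up y - 1)). assert (Hy' := frac_range y). fold y' in Hy'.
  replace (y + d) with ((y' + d) + IZR (up y - 1)) by (unfold y'; ring).
  rewrite lin_per by auto.
  replace (u0 y) with (u0 y') by (unfold y'; unfold Rminus; rewrite <- opp_IZR; apply per_int; auto).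
  destruct (Rle_dec (y' + d) 1) as [C1|C1].
  - set (z := y' + d). destruct (cell_decomp m Hm z) as [Ez Ht]. fold h in Ez, Ht.
    set (K := cellk m z) in *. set (t := locs m z) in *.
    assert (HK0 : 0 <= IZR K * h).
    { assert (0 < IZR (K + 1) * h) by (rewrite plus_IZR; unfold z in Ez; nra).
      assert (Q0 : 0 < IZR (K+1)) by nra. apply lt_IZR in Q0.
      apply Rmult_le_pos; [apply IZR_le; lia|lra]. }
    assert (HK1 : IZR (K + 1) * h <= 1).
    { assert (Q1 : IZR K * h < 1) by (unfold z in Ez; lra).
      assert (Q2 : IZR K < INR m).
      { apply Rmult_lt_reg_r with h; auto. unfold h at 2. rewrite Rinv_r; auto.
        apply Rgt_not_eq, INRm_pos; auto. }
      rewrite INR_IZR_INZ in Q2. apply lt_IZR in Q2.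
      assert (IZR (K + 1) <= INR m) by (rewrite INR_IZR_INZ; apply IZR_le; lia).
      replace 1 with (INR m * h) by (unfold h; field; apply Rgt_not_eq, INRm_pos; auto).
      nra. }
    rewrite plus_IZR in HK1.
    assert (EL := LI u0 Hper m Hm K t ltac:(change (/ INR m) with h; lra)).
    change (/ INR m) with h in EL. rewrite Ez, EL.
    unfold sl, UU. fold h.
    set (tau := t / h).
    replace (u0 (IZR K * h) + (u0 (IZR (K + 1) * h) - u0 (IZR K * h)) / h * t - u0 y')
      with ((1 - tau) * (u0 (IZR K * h) - u0 z) + tau * (u0 (IZR (K + 1) * h) - u0 z) + (u0 z - u0 y'))
      by (unfold tau; field; lra).
    apply conv1.
    + unfold tau; split. apply Rdiv_le_0_compat; lra.
      apply Rmult_le_reg_r with h; auto. unfold Rdiv; rewrite Rmult_assoc, Rinv_l; lra.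
    + apply W_closed; auto; try lra. rewrite Ez. unfold z in *.
      rewrite Rabs_left1; lra.
    + rewrite plus_IZR. apply W_closed; auto; try lra. unfold z in *.
      rewrite Rabs_pos_eq; lra.
    + apply W_closed; auto; try lra. unfold z. rewrite Rabs_pos_eq; lra.
  - set (z := y' + d - 1).
    replace (y' + d) with (IZR 0 * h + z + IZR 1) by (unfold z; simpl; ring).
    rewrite lin_per by auto. rewrite LI by (auto; change (/ INR m) with h; unfold z; lra).
    unfold sl, UU. fold h. simpl (IZR (0 + 1)). rewrite Rmult_0_l, Rmult_1_l.
    set (tau := z / h).
    replace (u0 0 + (u0 h - u0 0) / h * z - u0 y')
      with ((1 - tau) * (u0 1 - u0 y') + tau * ((u0 h - u0 z) + (u0 z - u0 0) + (u0 1 - u0 y')))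
      by (unfold tau; rewrite <- (Hper 0), Rplus_0_l; field; lra).
    apply conv2; auto.
    + unfold tau; split. apply Rdiv_le_0_compat; unfold z; lra.
      apply Rmult_le_reg_r with h; auto. unfold Rdiv; rewrite Rmult_assoc, Rinv_l; unfold z; lra.
    + apply W_closed; auto; try lra. rewrite Rabs_pos_eq; lra.
    + assert (Rabs (u0 h - u0 z) <= W u0 h)
        by (apply W_closed; auto; unfold z in *; try lra; rewrite Rabs_pos_eq; lra).
      assert (Rabs (u0 z - u0 0) <= W u0 d)
        by (apply W_closed; auto; unfold z in *; try lra; rewrite Rabs_pos_eq; lra).
      assert (Rabs (u0 1 - u0 y') <= W u0 d)
        by (apply W_closed; auto; unfold z in *; try lra; rewrite Rabs_pos_eq; lra).
      eapply Rle_trans. apply Rabs_triang. eapply Rle_trans. apply Rplus_le_compat_r. apply Rabs_triang.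
      lra.
Qed.

End S7.
Lemma aff_cont : forall e x, continuous (fun y : R => y - e) x.
Proof.
  intros e x. apply continuity_pt_filterlim.
  unfold continuity_pt, continue_in, limit1_in, limit_in. simpl. unfold R_dist.
  intros eps He. exists eps. split; auto. intros y [_ Hy].
  replace (y - e - (x - e)) with (y - x) by ring. auto.
Qed.

Lemma cont_of_pt : forall f x, continuity_pt f x -> continuous f x.
Proof. intros f x H. apply continuity_pt_filterlim; auto. Qed.
Section S8.
Variable u0 : R -> R.
Hypothesis Hper : forall x, u0 (x + 1) = u0 x.
Hypothesis Hcont : forall x, continuity_pt u0 x.
Variable m : nat.
Hypothesis Hm : (0 < m)%nat.

Lemma F_cont : forall d e x, continuous (fun x => Rabs (lin_interp m u0 (x - e + d) - u0 (x - e))) x.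
Proof.
  intros d e x. apply continuous_Rabs_comp.
  assert (C1 : continuous (fun x => lin_interp m u0 (x - e + d)) x).
  { assert (C0 : continuous (fun x => lin_interp m u0 (x - (e - d))) x).
    { apply (continuous_comp (fun x => x - (e - d)) (lin_interp m u0)).
      apply aff_cont. apply cont_of_pt. apply lin_cont; auto. }
    eapply continuous_ext; [|exact C0]. intros y; simpl. f_equal; ring. }
  assert (C2 : continuous (fun x => u0 (x - e)) x).
  { apply (continuous_comp (fun x => x - e) u0). apply aff_cont. apply cont_of_pt; auto. }
  exact (continuous_minus _ _ x C1 C2).
Qed.
End S8.
Lemma per_m (a : R) (p q : nat) (u0 : R -> R) (dl : R)
  (Ha : 0 < a) (Hp : (0 < p)%nat) (Hpq : (p < q)%nat)
  (Hcont : forall x, continuity_pt u0 x)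
  (Hper : forall x, u0 (x + 1) = u0 x) (m : nat) (Hm : (0 < m)%nat)
  (Hd : 0 < dl < (/ INR m) / INR q) :
  let mu := INR p / INR q in
  (forall x, jetI m (jet_init m u0 dl) x = lin_interp m u0 (x + dl))
  /\ (forall n x, jetI m (jet_iter m mu (jet_init m u0 dl) n) x
                = jetI m (jet_init m u0 dl) (frac (x - INR n * mu * / INR m)))
  /\ (forall n, 0 <= jet_err a mu u0 dl m n <= W u0 (/ INR m) + W u0 dl).
Proof.
  intros mu. set (h := / INR m).
  assert (Hh : 0 < h) by (apply h_pos; auto).
  assert (Hq : (0 < q)%nat) by lia.
  assert (Hq2 : 2 <= INR q) by (apply (le_INR 2); lia).
  assert (Hd2 : 0 < dl < h / 2).
  { split; [lra|]. apply Rlt_le_trans with (h / INR q); [apply Hd|].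
    unfold Rdiv. apply Rmult_le_compat_l; [lra|]. apply Rinv_le_contravar; lra. }
  assert (Hinit := init_eq u0 Hper m Hm dl ltac:(change (/ INR m) with h; lra)).
  assert (Hnm : forall n (K : Z), dl - INR n * mu * h <> IZR K * h).
  { intros n K. apply (nonmult m Hm p q n dl K Hq Hd). }
  assert (Hiter := iter_eq u0 Hper m Hm mu _ dl Hinit Hnm).
  assert (J : forall n x, jetI m (jet_iter m mu (jet_init m u0 dl) n) x
                = lin_interp m u0 (x + (dl - INR n * mu * h))).
  { intros n x. destruct (agree m Hm _ _ (fun i _ => Hiter n i) x) as [A1 _].
    rewrite A1. destruct (KEY u0 Hper m Hm _ (Hnm n) x) as [K1 _]. exact K1. }
  assert (P1 : forall x, jetI m (jet_init m u0 dl) x = lin_interp m u0 (x + dl)).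
  { intros x. transitivity (lin_interp m u0 (x + (dl - INR 0 * mu * h))).
    exact (J 0%nat x). f_equal. simpl. ring. }
  split; [exact P1|]. split.
  - intros n x. rewrite J, P1. unfold frac.
    rewrite <- (lin_per u0 Hper m Hm (x + (dl - INR n * mu * h)) (- (up (x - INR n * mu * h) - 1))).
    f_equal. rewrite opp_IZR. ring.
  - intros n. set (e := INR n * mu * h).
    assert (EI : jet_err a mu u0 dl m n =
       RInt (fun x => Rabs (lin_interp m u0 (x - e + dl) - u0 (x - e))) 0 1).
    { unfold jet_err. apply RInt_ext. intros x _. rewrite J. unfold exact_sol, frac.
      replace (x - a * (INR n * (mu * / INR m / a))) with (x - e)
        by (unfold e, h; field; repeat split; apply Rgt_not_eq; try apply INRm_pos; auto).
      replace (x - e - IZR (up (x - e) - 1)) with ((x - e) + IZR (- (up (x - e) - 1)))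
        by (rewrite opp_IZR; ring).
      rewrite per_int by auto. f_equal. f_equal. f_equal. unfold e; ring. }
    rewrite EI.
    assert (Ex : ex_RInt (fun x => Rabs (lin_interp m u0 (x - e + dl) - u0 (x - e))) 0 1).
    { apply (@ex_RInt_continuous R_CompleteNormedModule). intros z _. apply F_cont; auto. }
    split.
    + apply RInt_ge_0; auto; [lra|]. intros; apply Rabs_pos.
    + eapply Rle_trans. apply (RInt_le _ (fun _ => W u0 h + W u0 dl)); auto; try lra.
      apply ex_RInt_const.
      intros x _. replace (x - e + dl) with ((x - e) + dl) by ring.
      apply pw_bound; auto.
      rewrite RInt_const. unfold scal; simpl. unfold mult; simpl. right; ring.
Qed.
Lemma h_small : forall r0, 0 < r0 -> exists M : nat, forall m, (0 < m)%nat -> (M <= m)%nat -> / INR m <= r0.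
Proof.
  intros r0 Hr0. destruct (archimed_cor1 r0 Hr0) as [M [HM HM0]]. exists M.
  intros m Hm HMm. apply Rle_trans with (/ INR M); [|lra].
  apply Rinv_le_contravar. apply lt_0_INR; auto. apply le_INR; auto.
Qed.

Theorem mainTheorem4
  (a : R) (p q : nat) (u0 : R -> R) (delta : nat -> R)
  (Ha : 0 < a)
  (Hp : (0 < p)%nat) (Hpq : (p < q)%nat) (Hcop : Nat.gcd p q = 1%nat)
  (Hcont : forall x, continuity_pt u0 x)
  (Hper : forall x, u0 (x + 1) = u0 x)
  (Hdelta : forall m, admissible (INR p / INR q) m ->
            0 < delta m < (/ INR m) / INR q) :
  let mu := INR p / INR q in
  (forall m, admissible mu m ->
     (forall x, jetI m (jet_init m u0 (delta m)) x
                = lin_interp m u0 (x + delta m))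
     /\ (forall n x, jetI m (jet_iter m mu (jet_init m u0 (delta m)) n) x
                = jetI m (jet_init m u0 (delta m))
                       (frac (x - INR n * mu * / INR m)))
     /\ (forall n, Rbar_le (Finite (jet_err a mu u0 (delta m) m n))
                     (Rbar_plus (omega u0 (/ INR m)) (omega u0 (delta m)))))
  /\
  (forall eps, 0 < eps -> exists M : nat, forall m, admissible mu m -> (M <= m)%nat ->
     Rbar_lt (Rbar_abs (LimSup_seq (fun n => jet_err a mu u0 (delta m) m n)))
             (Finite eps))
  /\
  (exists L : nat -> R,
     (forall n eps, 0 < eps -> exists M : nat, forall m, admissible mu m -> (M <= m)%nat ->
        Rabs (jet_err a mu u0 (delta m) m n - L n) < eps)
     /\ LimSup_seq L = Finite 0).
Proof.
  intros mu.
  assert (SM : forall m, admissible mu m -> (0 < m)%nat /\ 0 < / INR m /\ 0 < delta m < / INR m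
     /\ forall n, 0 <= jet_err a mu u0 (delta m) m n <= W u0 (/ INR m) + W u0 (delta m)).
  { intros m Hadm. assert (Hm : (0 < m)%nat) by (destruct Hadm; auto).
    assert (Hd := Hdelta m Hadm).
    assert (Hh : 0 < / INR m) by (apply h_pos; auto).
    assert (Hq2 : 1 <= INR q) by (apply (le_INR 1); lia).
    assert (Hdh : delta m < / INR m).
    { apply Rlt_le_trans with (/ INR m / INR q); [apply Hd|].
      unfold Rdiv. rewrite <- (Rmult_1_r (/ INR m)) at 2. apply Rmult_le_compat_l; [lra|].
      rewrite <- Rinv_1. apply Rinv_le_contravar; lra. }
    destruct (per_m a p q u0 (delta m) Ha Hp Hpq Hcont Hper m Hm Hd) as [_ [_ P3]].
    repeat split; auto; try lra; apply P3. }
  assert (BND : forall eps, 0 < eps -> exists M : nat, forall m, admissible mu m -> (M <= m)%nat ->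
     forall n, 0 <= jet_err a mu u0 (delta m) m n <= eps / 2).
  { intros eps He. destruct (W_small u0 Hcont (eps / 4) ltac:(lra)) as [r0 [Hr0 Hs]].
    destruct (h_small r0 Hr0) as [M HM]. exists M. intros m Hadm HMm n.
    destruct (SM m Hadm) as [Hm [Hh [Hd Herr]]].
    specialize (HM m Hm HMm).
    assert (W1 : W u0 (/ INR m) <= eps / 4) by (apply Hs; lra).
    assert (W2 : W u0 (delta m) <= W u0 (/ INR m)) by (apply W_mono; auto; lra).
    specialize (Herr n). lra. }
  split; [|split].
  - intros m Hadm. assert (Hm : (0 < m)%nat) by (destruct Hadm; auto).
    destruct (SM m Hadm) as [_ [Hh [Hd Herr]]].
    destruct (per_m a p q u0 (delta m) Ha Hp Hpq Hcont Hper m Hm (Hdelta m Hadm)) as [P1 [P2 _]].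
    split; [exact P1|]. split; [exact P2|].
    intros n. destruct (omega_props u0 Hcont (/ INR m) Hh) as [O1 _].
    destruct (omega_props u0 Hcont (delta m) ltac:(lra)) as [O2 _].
    rewrite O1, O2. simpl. apply Herr.
  - intros eps He. destruct (BND eps He) as [M HM]. exists M. intros m Hadm HMm.
    specialize (HM m Hadm HMm).
    assert (L1 : Rbar_le (LimSup_seq (fun n => jet_err a mu u0 (delta m) m n))
                         (LimSup_seq (fun _ => eps / 2))).
    { apply LimSup_le. exists 0%nat. intros n _. apply HM. }
    assert (L0 : Rbar_le (LimSup_seq (fun _ => 0))
                         (LimSup_seq (fun n => jet_err a mu u0 (delta m) m n))).
    { apply LimSup_le. exists 0%nat. intros n _. apply HM. }
    rewrite LimSup_seq_const in L1, L0.
    destruct (LimSup_seq _) as [l| |]; simpl in *; try contradiction.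
    rewrite Rabs_pos_eq; lra.
  - exists (fun _ => 0). split.
    + intros n eps He. destruct (BND eps He) as [M HM]. exists M. intros m Hadm HMm.
      specialize (HM m Hadm HMm n). rewrite Rminus_0_r, Rabs_pos_eq; lra.
    + rewrite LimSup_seq_const. reflexivity.
Qed.
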